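(* Fix an integer $N\ge 1$. For real $\mu$, let $\ell^2_\mu\subset\mathbb{C}^\infty$ be the space of sequences with norm $\|\mathbf u\|_{\ell^2_\mu}=\bigl(\sum_{k\ge0}|u_k|^2(k+1)^{2\mu}\bigr)^{1/2}$. Let $\mathcal L$, $\mathcal B$, $D$ and the operators $\mathcal S_\lambda$ be as in the context. Let $\mathbf c\in\mathbb{C}^N$, and let $\mathbf f\in\ell^2_{\lambda-N+1}$ for some $\lambda\in\{D-1,D,D+1,\dots\}$ (the Chebyshev coefficients of the right-hand side). Suppose that $\begin{pmatrix}\mathcal B\\ \mathcal L\end{pmatrix}:\ell^2_{\lambda+1}\to\ell^2_\lambda$ is invertible, and let $\mathbf u\in\ell^2_{\lambda+1}$ be the solution of $\begin{pmatrix}\mathcal B\\ \mathcal L\end{pmatrix}\mathbf u=\begin{pmatrix}\mathbf c\\ \mathcal S_{N-1}\cdots\mathcal S_0\mathbf f\end{pmatrix}$. Let $\mathcal P_n=(I_n,\mathbf 0)$ be the $n\times\infty$ projection onto the first $n$ entries, $A_n=\mathcal P_n\begin{pmatrix}\mathcal B\\ \mathcal L\end{pmatrix}\mathcal P_n^\top$, and define $$\mathbf u_n=A_n^{-1}\mathcal P_n\begin{pmatrix}\mathbf c\\ \mathcal S_{N-1}\cdots\mathcal S_0\mathbf f\end{pmatrix}.$$ Then there is a constant $C$, independent of $n$, such that (for all sufficiently large $n$) $$\|\mathbf u-\mathcal P_n^\top\mathbf u_n\|_{\ell^2_{\lambda+1}}\le C\,\|\mathbf u-\mathcal P_n^\top\mathcal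 P_n\mathbf u\|_{\ell^2_{\lambda+1}}\longrightarrow0\quad(n\to\infty).$$
   Context: Chebyshev polynomials are $T_k(x)=\cos(k\arccos x)$. For integers $\lambda\ge1$, $C^{(\lambda)}_k$ are the ultraspherical polynomials, orthogonal on $[-1,1]$ with weight $(1-x^2)^{\lambda-1/2}$ and normalized so that $C^{(\lambda)}_k(x)=\frac{2^k(\lambda)_k}{k!}x^k+O(x^{k-1})$, $(\lambda)_k=\frac{(\lambda+k-1)!}{(\lambda-1)!}$. Operators act on coefficient sequences indexed from $0$. $(\mathcal D_\lambda\mathbf u)_j=2^{\lambda-1}(\lambda-1)!\,(j+\lambda)u_{j+\lambda}$ (maps Chebyshev coefficients of $u$ to $C^{(\lambda)}$ coefficients of $u^{(\lambda)}$). $(\mathcal S_0\mathbf u)_0=u_0-\tfrac12u_2$, $(\mathcal S_0\mathbf u)_j=\tfrac12(u_j-u_{j+2})$ for $j\ge1$ (Chebyshev to $C^{(1)}$ coefficients); for $\lambda\ge1$, $(\mathcal S_\lambda\mathbf v)_j=\frac{\lambda}{\lambda+j}v_j-\frac{\lambda}{\lambda+j+2}v_{j+2}$ ($C^{(\lambda)}$ to $C^{(\lambda+1)}$ coefficients). $\mathcal M_0[a]$ maps Chebyshev coefficients of $v$ to Chebyshev coefficients of $av$, and for $\lambda\ge1$, $\mathcal M_\lambda[a]$ maps $C^{(\lambda)}$ coefficients of $v$ to $C^{(\lambda)}$ coefficients of $av$. The $N$th order differential operator $u\mapsto u^{(N)}+\sum_{\lambda=0}^{N-1}a^\lambda u^{(\lambda)}$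 on $[-1,1]$ (leading coefficient $1$) is represented on Chebyshev coefficients by $\mathcal L=\mathcal D_N+\sum_{\lambda=1}^{N-1}\mathcal S_{N-1}\cdots\mathcal S_\lambda\mathcal M_\lambda[a^\lambda]\mathcal D_\lambda+\mathcal S_{N-1}\cdots\mathcal S_0\mathcal M_0[a^0]$, where the coefficient functions $a^0,\dots,a^{N-1}$ are sufficiently smooth that each $\mathcal M_\lambda[a^\lambda]$ is bounded on every $\ell^2_\mu$. $\mathcal B$ is a linear operator from sequences to $\mathbb{C}^N$ representing exactly $N$ boundary conditions on the Chebyshev coefficients (e.g. Dirichlet: rows $(T_k(-1))_k$ and $(T_k(1))_k$), and $D$ is an integer such that $\mathcal B:\ell^2_D\to\mathbb{C}^N$ is bounded. $\begin{pmatrix}\mathcal B\\ \mathcal L\end{pmatrix}$ outputs the $N$ entries of $\mathcal B\mathbf u$ followed by $\mathcal L\mathbf u$. *)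

(* Defs.v *)
From Stdlib Require Import Reals ZArith.
From Coquelicot Require Export Coquelicot.
Open Scope R_scope.

Definition seqC := nat -> C.

Definition l2_term (mu : R) (u : seqC) (k : nat) : R :=
  (Cmod (u k)) ^ 2 * Rpower (INR k + 1) (2 * mu).
Definition in_l2 (mu : R) (u : seqC) : Prop := ex_series (l2_term mu u).
Definition l2norm (mu : R) (u : seqC) : R := sqrt (Series (l2_term mu u)).

Definition cseries_conv (s : nat -> C) : Prop :=
  ex_series (fun k => Re (s k)) /\ ex_series (fun k => Im (s k)).
Definition cseries (s : nat -> C) : C :=
  (Series (fun k => Re (s k)), Series (fun k => Im (s k))).
Definition cint (g : R -> C) (lo hi : R) : C :=
  (RInt (fun x => Re (g x)) lo hi, RInt (fun x => Im (g x)) lo hi).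

Fixpoint csum (n : nat) (g : nat -> C) : C :=
  match n with O => RtoC 0 | S m => Cplus (csum m g) (g m) end.

Definition cheb_T (k : nat) (x : R) : R := cos (INR k * acos x).

(** Ultraspherical polynomials C^(lam)_k (lam >= 1), via the three-term
    recurrence  (k+1) C_{k+1} = 2(k+lam) x C_k - (k+2lam-1) C_{k-1},
    C_0 = 1, C_1 = 2 lam x.  [ultra_pair lam k x = (C_k(x), C_{k+1}(x))]. *)
Fixpoint ultra_pair (lam k : nat) (x : R) : R * R :=
  match k with
  | O => (1, 2 * INR lam * x)
  | S k' => let (p, q) := ultra_pair lam k' x in
      (q, (2 * (INR k' + 1 + INR lam) * x * q
           - (INR k' + 2 * INR lam) * p) / (INR k' + 2))
  end.
Definition ultra (lam k : nat) (x : R) : R := fst (ultra_pair lam k x).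

(** Weight (1-x^2)^(lam-1/2) for lam >= 1, written (1-x^2)^(lam-1) sqrt(1-x^2). *)
Definition ultra_w (lam : nat) (x : R) : R := (1 - x ^ 2) ^ (lam - 1) * sqrt (1 - x ^ 2).

(** Matrix entries of the multiplication operator M_lam[a]: the j-th
    coefficient (in the orthogonal basis) of a * (k-th basis polynomial). *)
Definition mult_entry (lam : nat) (a : R -> C) (j k : nat) : C :=
  match lam with
  | O => (* Chebyshev basis, weight (1-x^2)^(-1/2); substitution x = cos t *)
      Cmult (cint (fun t => Cmult (a (cos t))
                      (RtoC (cheb_T k (cos t) * cheb_T j (cos t)))) 0 PI)
            (RtoC (/ RInt (fun t => (cheb_T j (cos t)) ^ 2) 0 PI))
  | _ =>
      Cmult (cint (fun x => Cmult (a x)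
                      (RtoC (ultra lam k x * ultra lam j x * ultra_w lam x))) (-1) 1)
            (RtoC (/ RInt (fun x => (ultra lam j x) ^ 2 * ultra_w lam x) (-1) 1))
  end.
Definition Mop (lam : nat) (a : R -> C) (v : seqC) : seqC :=
  fun j => cseries (fun k => Cmult (mult_entry lam a j k) (v k)).

Definition Dop (lam : nat) (u : seqC) : seqC :=
  fun j => Cmult (RtoC (2 ^ (lam - 1) * INR (fact (lam - 1)) * INR (j + lam)))
                 (u (j + lam)%nat).

Definition S0 (u : seqC) : seqC :=
  fun j => match j with
           | O => Cminus (u 0%nat) (Cmult (RtoC (1/2)) (u 2%nat))
           | _ => Cmult (RtoC (1/2)) (Cminus (u j) (u (j + 2)%nat))
           end.
Definition Slam (lam : nat) (v : seqC) : seqC :=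
  fun j => Cminus (Cmult (RtoC (INR lam / (INR lam + INR j))) (v j))
                  (Cmult (RtoC (INR lam / (INR lam + INR j + 2))) (v (j + 2)%nat)).
Definition Sop (lam : nat) : seqC -> seqC :=
  match lam with O => S0 | _ => Slam lam end.

(** [Schain lo n] = S_{lo+n-1} ... S_{lo+1} S_lo. *)
Fixpoint Schain (lo n : nat) (u : seqC) : seqC :=
  match n with O => u | S m => Schain (S lo) m (Sop lo u) end.

(** L = D_N + sum_{lam=1}^{N-1} S_{N-1}..S_lam M_lam[a^lam] D_lam
          + S_{N-1}..S_0 M_0[a^0]. *)
Definition Lop (N : nat) (a : nat -> R -> C) (u : seqC) : seqC :=
  fun j => Cplus (Cplus (Dop N u j)
      (csum (N - 1) (fun i => Schain (S i) (N - S i) (Mop (S i) (a (S i)) (Dop (S i) u)) j)))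
      (Schain 0 N (Mop 0 (a 0%nat) u) j).

Definition BLop (N : nat) (a : nat -> R -> C) (B : nat -> seqC -> C) (u : seqC) : seqC :=
  fun j => if (j <? N)%nat then B j u else Lop N a u (j - N)%nat.

Definition rhs (N : nat) (c : nat -> C) (f : seqC) : seqC :=
  fun j => if (j <? N)%nat then c j else Schain 0 N f (j - N)%nat.

(** P_n^T P_n : keep the first n entries, zero the rest. *)
Definition pad (n : nat) (x : seqC) : seqC := fun k => if (k <? n)%nat then x k else RtoC 0.

Definition seq_sub (u v : seqC) : seqC := fun k => Cminus (u k) (v k).

Definition invertible_between (T : seqC -> seqC) (m1 m2 : R) : Prop :=
  (exists K, forall u, in_l2 m1 u -> in_l2 m2 (T u) /\ l2norm m2 (T u) <= K * l2norm m1 u) /\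
  (forall g, in_l2 m2 g -> exists u, in_l2 m1 u /\ forall j, T u j = g j) /\
  (forall u v, in_l2 m1 u -> in_l2 m1 v -> (forall j, T u j = T v j) -> forall k, u k = v k) /\
  (exists K, forall u, in_l2 m1 u -> l2norm m1 u <= K * l2norm m2 (T u)).

(** The n x n finite section A_n = P_n T P_n^T is invertible (on C^n, vectors
    represented by their first n entries). *)
Definition finsec_invertible (T : seqC -> seqC) (n : nat) : Prop :=
  forall b : seqC, exists x : seqC,
    (forall i, (i < n)%nat -> T (pad n x) i = b i) /\
    (forall y : seqC, (forall i, (i < n)%nat -> T (pad n y) i = b i) ->
       forall k, (k < n)%nat -> y k = x k).

(* Main.v *)
Require Import Defs.
From Stdlib Require Import Reals ZArith Lra Lia Psatz FunctionalExtensionality.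
From Coquelicot Require Import Coquelicot.
Open Scope R_scope.

Module FD.
From mathcomp Require Import all_boot all_algebra.
From mathcomp Require Import Rstruct.
Import GRing.Theory.
Local Open Scope ring_scope.

Lemma fin_surj (m : nat) (f : (nat -> R) -> (nat -> R)) :
 (forall x y, (forall k, lt k m -> x k = y k) -> forall i, lt i m -> f x i = f y i) ->
 (forall x y a i, lt i m -> f (fun k => Rplus (Rmult a (x k)) (y k)) i = Rplus (Rmult a (f x i)) (f y i)) ->
 (forall x, (forall i, lt i m -> f x i = 0%R) -> forall k, lt k m -> x k = 0%R) ->
 forall b, exists x, forall i, lt i m -> f x i = b i.
Proof.
move=> Hdep Hlin Hinj b.
case: m Hdep Hlin Hinj => [|m] Hdep Hlin Hinj.
  by exists b => i /PeanoNat.Nat.nlt_0_r.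
pose tov (x : nat -> R) : 'rV[R]_m.+1 := \row_(j < m.+1) x j.
pose ofv (r : 'rV[R]_m.+1) : nat -> R := fun k => if (k < m.+1)%N then r 0 (inord k) else 0.
pose g r := tov (f (ofv r)).
have ltP' : forall k, lt k m.+1 <-> (k < m.+1)%N by move=> k; split => /ltP.
have ofvK : forall r, tov (ofv r) = r.
  move=> r; apply/rowP => j; rewrite /tov /ofv mxE ltn_ord.
  by congr (r _ _); apply/val_inj; rewrite /= inordK.
have glin : forall a r s, g (a *: r + s) = a *: g r + g s.
  move=> a r s; apply/rowP => j; rewrite /g /tov !mxE.
  rewrite -[RHS]/(Rplus (Rmult a (f (ofv r) j)) (f (ofv s) j)) -Hlin; last by apply/ltP'.
  apply: Hdep; last by apply/ltP'.
  by move=> k /ltP' Hk; rewrite /ofv Hk !mxE.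
have g0 : g 0 = 0.
  have H := glin 1 0 0; rewrite !scale1r addr0 in H.
  by apply: (addrI (g 0)); rewrite addr0 -H.
have gadd : {morph g : r s / r + s} by move=> r s; rewrite -[r]scale1r glin !scale1r.
have gsc : forall a r, g (a *: r) = a *: g r by move=> a r; rewrite -[a *: r]addr0 glin g0 addr0.
pose M := \matrix_(i < m.+1, j < m.+1) g (delta_mx 0 i) 0 j.
have gM : forall r, r *m M = g r.
  move=> r; rewrite mulmx_sum_row {2}(row_sum_delta r) (big_morph g gadd g0).
  apply: eq_bigr => i _; rewrite gsc; congr (_ *: _).
  by apply/rowP => j; rewrite !mxE.
have inj : forall r, g r = 0 -> r = 0.
  move=> r Hr; apply/rowP => j; rewrite mxE.
  have <- : ofv r j = r 0 j by rewrite /ofv ltn_ord inord_val.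
  apply: Hinj; last by apply/ltP'.
  move=> i /ltP' Hi.
  have := congr1 (fun v : 'rV[R]_m.+1 => v 0 (Ordinal Hi)) Hr; rewrite /g /tov !mxE.
  by [].
have kerM : kermx M = 0.
  apply/row_matrixP => i; rewrite row0.
  apply: inj; rewrite -(gM (row i (kermx M))) -row_mul mulmx_ker; exact: row0.
have fr : row_free M.
  rewrite /row_free; apply/eqP.
  have := mxrank_ker M; rewrite kerM mxrank0 => /esym/eqP.
  rewrite subn_eq0 => H; apply/eqP; rewrite eqn_leq rank_leq_row H.
  done.
rewrite row_free_unit in fr.
exists (ofv (tov b *m invmx M)) => i Hi.
have := gM (tov b *m invmx M); rewrite -mulmxA mulVmx // mulmx1 => /(congr1 (fun v : 'rV[R]_m.+1 => v 0 (Ordinal (proj1 (ltP' i) Hi)))).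
by rewrite /g /tov !mxE.
Qed.
End FD.

Lemma Rpower_pos x e : 0 < Rpower x e.
Proof. unfold Rpower. apply exp_pos. Qed.

Lemma INR1_pos k : 0 < INR k + 1.
Proof. pose proof (pos_INR k). lra. Qed.

Lemma l2_term_nonneg mu u k : 0 <= l2_term mu u k.
Proof.
  unfold l2_term. apply Rmult_le_pos.
  - apply pow2_ge_0.
  - left; apply Rpower_pos.
Qed.

Lemma ser_cmp (a b : nat -> R) :
  (forall k, 0 <= a k <= b k) -> ex_series b -> ex_series a /\ Series a <= Series b.
Proof.
  intros H Hb. split.
  - apply (ex_series_le a b); auto. intro n. specialize (H n).
    change (norm (a n)) with (Rabs (a n)). rewrite Rabs_pos_eq; lra.
  - apply Series_le; auto.
Qed.

Lemma Series_nonneg (a : nat -> R) : (forall k, 0 <= a k) -> 0 <= Series a.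
Proof.
  intros H. unfold Series.
  assert (Hp : forall n, 0 <= sum_n a n).
  { intro n. induction n. rewrite sum_O. auto. rewrite sum_Sn.
    change (plus (sum_n a n) (a (S n))) with (sum_n a n + a (S n)). specialize (H (S n)). lra. }
  assert (E : ex_lim_seq (sum_n a)).
  { apply ex_lim_seq_incr. intro n. rewrite sum_Sn.
    change (plus (sum_n a n) (a (S n))) with (sum_n a n + a (S n)). specialize (H (S n)). lra. }
  pose proof (Lim_seq_correct _ E) as L.
  case_eq (Lim_seq (sum_n a)); [intros r Hr| intros Hr | intros Hr]; simpl; try lra.
  rewrite Hr in L.
  apply (is_lim_seq_le (fun _ => 0) (sum_n a) 0 r); auto.
  apply is_lim_seq_const.
Qed.

Lemma ser_shift (a : nat -> R) m :
  (forall k, 0 <= a k) -> ex_series a ->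
  ex_series (fun k => a (k + m)%nat) /\ Series (fun k => a (k + m)%nat) <= Series a.
Proof.
  intros H Ha.
  assert (E : ex_series (fun k => a (m + k)%nat)) by (apply ex_series_incr_n; auto).
  split.
  - eapply ex_series_ext; [|exact E]. intro n; simpl; f_equal; lia.
  - destruct m.
    + apply Req_le. apply Series_ext. intro; f_equal; lia.
    + rewrite (Series_incr_n a (S m)); [|lia|auto].
      rewrite (Series_ext _ (fun k => a (S m + k)%nat)) by (intro; f_equal; lia).
      assert (0 <= sum_f_R0 a (Init.Nat.pred (S m))).
      { apply cond_pos_sum. auto. }
      lra.
Qed.

Lemma ser_term (a : nat -> R) k :
  (forall k, 0 <= a k) -> ex_series a -> a k <= Series a.
Proof.
  intros H Ha.
  rewrite (Series_incr_n a (S k)); [|lia|auto]. simpl Init.Nat.pred.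
  assert (0 <= Series (fun j => a (S k + j)%nat)).
  { apply Series_nonneg. auto. }
  assert (a k <= sum_f_R0 a k).
  { destruct k. simpl. lra. simpl.
    assert (0 <= sum_f_R0 a k) by (apply cond_pos_sum; auto). lra. }
  lra.
Qed.

Lemma exp_le' x y : x <= y -> exp x <= exp y.
Proof. intros [H|H]. left; apply exp_increasing; auto. subst; lra. Qed.

Lemma rp_cmp x y M e : 0 < x -> 0 < y -> x <= M * y -> y <= M * x ->
  Rpower x e <= Rpower M (Rabs e) * Rpower y e.
Proof.
  intros Hx Hy H1 H2.
  assert (HM : 0 < M).
  { destruct (Rle_or_lt M 0); auto. nra. }
  unfold Rpower. rewrite <- exp_plus. apply exp_le'.
  assert (ln x <= ln M + ln y). { rewrite <- ln_mult by lra. apply ln_le; lra. }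
  assert (ln y <= ln M + ln x). { rewrite <- ln_mult by lra. apply ln_le; lra. }
  assert (Hd : Rabs (ln x - ln y) <= ln M) by (apply Rabs_le; lra).
  assert (e * (ln x - ln y) <= Rabs e * ln M).
  { apply Rle_trans with (Rabs (e * (ln x - ln y))). apply Rle_abs.
    rewrite Rabs_mult. apply Rmult_le_compat_l. apply Rabs_pos. auto. }
  lra.
Qed.

Lemma rp_mono x a b : 1 <= x -> a <= b -> Rpower x a <= Rpower x b.
Proof. intros; apply Rle_Rpower; auto. Qed.

Lemma rp_sq x mu : 0 < x -> Rpower x (2 * (mu + 1)) = Rpower x (2 * mu) * x ^ 2.
Proof.
  intros Hx. replace (2 * (mu + 1)) with (2 * mu + INR 2) by (simpl; lra).
  rewrite Rpower_plus, Rpower_pow; auto.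
Qed.
Definition Q (mu : R) (u : seqC) : R := Series (l2_term mu u).

Definition bnd (T : seqC -> seqC) (mu1 mu2 : R) : Prop :=
  exists K, 0 <= K /\ forall v, in_l2 mu1 v -> in_l2 mu2 (T v) /\ Q mu2 (T v) <= K * Q mu1 v.

Lemma Q_nonneg mu u : 0 <= Q mu u.
Proof. apply Series_nonneg. intro; apply l2_term_nonneg. Qed.

Lemma ser_lin (a b : nat -> R) c d : ex_series a -> ex_series b ->
  ex_series (fun k => c * a k + d * b k) /\ Series (fun k => c * a k + d * b k) = c * Series a + d * Series b.
Proof.
  intros Ha Hb.
  assert (E1 : ex_series (fun k => c * a k)).
  { eapply ex_series_ext; [|apply (ex_series_scal_l c a Ha)]. intro; reflexivity. }
  assert (E2 : ex_series (fun k => d * b k)).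
  { eapply ex_series_ext; [|apply (ex_series_scal_l d b Hb)]. intro; reflexivity. }
  split.
  - eapply ex_series_ext; [|apply (ex_series_plus _ _ E1 E2)]. intro; reflexivity.
  - rewrite Series_plus by auto. rewrite !Series_scal_l. reflexivity.
Qed.

Lemma sq_le x y z : 0<=x -> 0 <= y -> 0 <= z -> x <= y + z -> x ^ 2 <= 2 * y ^ 2 + 2 * z ^2.
Proof. intros.
 assert (x * x <= (y+z) * (y+z)) by (apply Rmult_le_compat; lra). pose proof (pow2_ge_0 (y - z)). simpl in *. lra. Qed.

Lemma Cmod_sq_add a b : Cmod (Cplus a b) ^ 2 <= 2 * Cmod a ^ 2 + 2 * Cmod b ^ 2.
Proof.
  pose proof (Cmod_triangle a b). pose proof (Cmod_ge_0 a). pose proof (Cmod_ge_0 b).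
  pose proof (Cmod_ge_0 (Cplus a b)).
  apply sq_le; auto.
Qed.

Lemma Cmod_sq_sub a b : Cmod (Cminus a b) ^ 2 <= 2 * Cmod a ^ 2 + 2 * Cmod b ^ 2.
Proof.
  unfold Cminus. pose proof (Cmod_sq_add a (Copp b)). rewrite Cmod_opp in H. auto.
Qed.

Lemma Cmod_Rmult r z : Cmod (Cmult (RtoC r) z) = Rabs r * Cmod z.
Proof. rewrite Cmod_mult, Cmod_R. reflexivity. Qed.

Lemma bnd_pw T mu1 mu2 K1 K2 s : 0 <= K1 -> 0 <= K2 ->
  (forall v k, l2_term mu2 (T v) k <= K1 * l2_term mu1 v k + K2 * l2_term mu1 v (k + s)%nat) ->
  bnd T mu1 mu2.
Proof.
  intros H1 H2 H. exists (K1 + K2). split; [lra|]. intros v Hv.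
  destruct (ser_shift (l2_term mu1 v) s (l2_term_nonneg mu1 v) Hv) as [Es Ss].
  destruct (ser_lin _ _ K1 K2 Hv Es) as [El Sl].
  destruct (ser_cmp (l2_term mu2 (T v)) _ (fun k => conj (l2_term_nonneg _ _ k) (H v k)) El) as [E S].
  split; auto. unfold Q. rewrite Sl in S.
  pose proof (Q_nonneg mu1 v). unfold Q in H0. nra.
Qed.

Lemma bnd_comp T1 T2 a b c : bnd T1 a b -> bnd T2 b c -> bnd (fun v => T2 (T1 v)) a c.
Proof.
  intros [K1 [HK1 H1]] [K2 [HK2 H2]]. exists (K2 * K1). split; [nra|].
  intros v Hv. destruct (H1 v Hv) as [E1 S1]. destruct (H2 _ E1) as [E2 S2].
  split; auto. apply Rle_trans with (K2 * Q b (T1 v)); auto.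
  rewrite Rmult_assoc. apply Rmult_le_compat_l; auto.
Qed.

Lemma bnd_embed mu1 mu2 : mu2 <= mu1 -> bnd (fun v => v) mu1 mu2.
Proof.
  intros Hm. apply (bnd_pw _ _ _ 1 0 0); try lra.
  intros v k. unfold l2_term. rewrite Rmult_0_l, Rplus_0_r, Rmult_1_l.
  apply Rmult_le_compat_l. apply pow2_ge_0. apply rp_mono.
  pose proof (pos_INR k); lra. lra.
Qed.

Lemma bnd_plus T1 T2 a b : bnd T1 a b -> bnd T2 a b ->
  bnd (fun v j => Cplus (T1 v j) (T2 v j)) a b.
Proof.
  intros [K1 [HK1 H1]] [K2 [HK2 H2]]. exists (2 * K1 + 2 * K2). split; [nra|].
  intros v Hv. destruct (H1 v Hv) as [E1 S1]. destruct (H2 v Hv) as [E2 S2].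
  destruct (ser_lin _ _ 2 2 E1 E2) as [El Sl].
  assert (Hp : forall k, 0 <= l2_term b (fun j => Cplus (T1 v j) (T2 v j)) k <=
     2 * l2_term b (T1 v) k + 2 * l2_term b (T2 v) k).
  { intro k. split. apply l2_term_nonneg. unfold l2_term.
    pose proof (Cmod_sq_add (T1 v k) (T2 v k)). pose proof (Rpower_pos (INR k + 1) (2 * b)). nra. }
  destruct (ser_cmp _ _ Hp El) as [E S]. split; auto.
  unfold Q in *. rewrite Sl in S. nra.
Qed.

Lemma l2_term_zero mu k : l2_term mu (fun _ => RtoC 0) k = 0.
Proof. unfold l2_term. rewrite Cmod_0. ring. Qed.

Lemma is_series_zero : is_series (fun _ : nat => 0) 0.
Proof.
  unfold is_series. apply filterlim_ext with (fun _ => 0).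
  intro n. rewrite sum_n_const. ring. apply filterlim_const.
Qed.

Lemma ex_series_zero : ex_series (fun _ : nat => 0).
Proof. exists 0. apply is_series_zero. Qed.

Lemma Series_0 (a : nat -> R) : (forall k, a k = 0) -> Series a = 0.
Proof.
  intro H. rewrite (Series_ext _ (fun _ => 0)) by auto.
  apply is_series_unique. apply is_series_zero.
Qed.

Lemma bnd_zero a b : bnd (fun v j => RtoC 0) a b.
Proof.
  exists 0. split; [lra|]. intros v Hv.
  assert (E : ex_series (l2_term b (fun _ => RtoC 0))).
  { eapply ex_series_ext; [|apply ex_series_zero]. intro k. rewrite l2_term_zero. auto. }
  split. exact E. unfold Q. rewrite (Series_ext _ (fun _ => 0)) by (intro; apply l2_term_zero).
  rewrite Series_0 by auto. lra.
Qed.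

Lemma bnd_csum (F : nat -> seqC -> seqC) a b m :
  (forall i, (i < m)%nat -> bnd (F i) a b) ->
  bnd (fun v j => csum m (fun i => F i v j)) a b.
Proof.
  induction m; intros H.
  - simpl. apply bnd_zero.
  - simpl. apply (bnd_plus (fun v j => csum m (fun i => F i v j)) (F m)).
    apply IHm. intros; apply H; lia. apply H; lia.
Qed.

Lemma bnd_ext T1 T2 a b : (forall v j, T1 v j = T2 v j) -> bnd T1 a b -> bnd T2 a b.
Proof.
  intros He [K [HK H]]. exists K. split; auto. intros v Hv.
  destruct (H v Hv) as [E S].
  assert (Ht : forall k, l2_term b (T1 v) k = l2_term b (T2 v) k).
  { intro k. unfold l2_term. rewrite He. auto. }
  split. eapply ex_series_ext; [exact Ht| exact E].
  unfold Q in *. rewrite <- (Series_ext _ _ Ht). auto.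
Qed.

Lemma pow2_abs' (a x : R) : (Rabs a * x) ^ 2 = a ^ 2 * x ^ 2.
Proof. rewrite Rpow_mult_distr. rewrite pow2_abs. reflexivity. Qed.

Lemma Cmod_lin2_sq al be z w :
  Cmod (Cminus (Cmult (RtoC al) z) (Cmult (RtoC be) w)) ^ 2 <= 2 * al ^ 2 * Cmod z ^ 2 + 2 * be ^ 2 * Cmod w ^ 2.
Proof.
  eapply Rle_trans. apply Cmod_sq_sub. rewrite !Cmod_Rmult, !pow2_abs'. lra.
Qed.

Definition dcst (l : nat) : R := 2 ^ (l - 1) * INR (Factorial.fact (l - 1)).

Lemma dcst_nonneg l : 0 <= dcst l.
Proof. unfold dcst. apply Rmult_le_pos. apply pow_le; lra. apply pos_INR. Qed.

Lemma mul_le4 a b c d : 0 <= a -> 0 <= c -> a <= b -> c <= d -> a * c <= b * d.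
Proof. intros. apply Rmult_le_compat; auto. Qed.

Lemma Dop_pw l mu v k :
  l2_term mu (Dop l v) k <=
  (dcst l ^ 2 * Rpower (INR l + 1) (Rabs (2 * mu))) * l2_term (mu + 1) v (k + l).
Proof.
  unfold l2_term, Dop. rewrite Cmod_Rmult. fold (dcst l).
  rewrite plus_INR.
  set (q := INR k + INR l + 1).
  assert (Hk := pos_INR k). assert (Hl := pos_INR l).
  assert (Hq : 0 < q) by (unfold q; lra).
  rewrite rp_sq by auto.
  assert (HP : Rpower (INR k + 1) (2 * mu) <= Rpower (INR l + 1) (Rabs (2 * mu)) * Rpower q (2 * mu)).
  { apply rp_cmp; unfold q; try lra. nra. nra. }
  rewrite Rabs_pos_eq by (apply Rmult_le_pos; [apply dcst_nonneg| lra]).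
  set (V := Cmod (v (k + l)%nat)). set (P := Rpower (INR k + 1) (2 * mu)).
  set (W := Rpower (INR l + 1) (Rabs (2 * mu))). set (Pq := Rpower q (2 * mu)).
  fold P in HP. fold W Pq in HP.
  assert (Hx : (INR k + INR l) ^ 2 <= q ^ 2).
  { unfold q. simpl. nra. }
  assert (HP0 : 0 <= P) by (left; apply Rpower_pos).
  assert (HV : 0 <= V ^ 2) by apply pow2_ge_0.
  assert (Hd : 0 <= dcst l ^ 2) by apply pow2_ge_0.
  replace ((dcst l * (INR k + INR l) * V) ^ 2 * P) with
      ((dcst l ^ 2 * V ^ 2) * ((INR k + INR l) ^ 2 * P)) by ring.
  replace (dcst l ^ 2 * W * (V ^ 2 * (Pq * q ^ 2))) with
      ((dcst l ^ 2 * V ^ 2) * (q ^ 2 * (W * Pq))) by ring.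
  apply Rmult_le_compat_l. nra.
  apply mul_le4; auto. apply pow2_ge_0.
Qed.

Lemma Dop_bnd l mu : bnd (Dop l) (mu + 1) mu.
Proof.
  apply (bnd_pw _ _ _ 0 (dcst l ^ 2 * Rpower (INR l + 1) (Rabs (2 * mu))) l); try lra.
  apply Rmult_le_pos. apply pow2_ge_0. left; apply Rpower_pos.
  intros v k. rewrite Rmult_0_l, Rplus_0_l. apply Dop_pw.
Qed.

Lemma w3 j mu : Rpower (INR j + 1) (2 * mu) <= Rpower 3 (Rabs (2 * mu)) * Rpower (INR (j + 2) + 1) (2 * mu).
Proof.
  assert (Hj := pos_INR j). apply rp_cmp; try rewrite plus_INR; simpl; lra.
Qed.

Lemma Slam_pw k mu v j : (1 <= k)%nat ->
  l2_term (mu + 1) (Slam k v) j <=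
  (2 * INR k ^ 2) * l2_term mu v j + (2 * INR k ^ 2 * Rpower 3 (Rabs (2 * mu))) * l2_term mu v (j + 2).
Proof.
  intros Hk1. apply le_INR in Hk1. simpl in Hk1.
  unfold l2_term, Slam.
  assert (Hj := pos_INR j).
  rewrite rp_sq by lra.
  set (al := INR k / (INR k + INR j)). set (be := INR k / (INR k + INR j + 2)).
  pose proof (Cmod_lin2_sq al be (v j) (v (j + 2)%nat)) as H.
  assert (Ha : (al * (INR j + 1)) ^ 2 <= INR k ^ 2).
  { unfold al. apply pow_incr. split.
    apply Rmult_le_pos. apply Rmult_le_pos; [lra| left; apply Rinv_0_lt_compat; lra]. lra.
    unfold Rdiv. apply Rle_trans with (INR k * / (INR k + INR j) * (INR k + INR j)).
    apply Rmult_le_compat_l. apply Rmult_le_pos; [lra| left; apply Rinv_0_lt_compat; lra]. lra.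
    right. field. lra. }
  assert (Hb : (be * (INR j + 1)) ^ 2 <= INR k ^ 2).
  { unfold be. apply pow_incr. split.
    apply Rmult_le_pos. apply Rmult_le_pos; [lra| left; apply Rinv_0_lt_compat; lra]. lra.
    unfold Rdiv. apply Rle_trans with (INR k * / (INR k + INR j + 2) * (INR k + INR j + 2)).
    apply Rmult_le_compat_l. apply Rmult_le_pos; [lra| left; apply Rinv_0_lt_compat; lra]. lra.
    right. field. lra. }
  pose proof (w3 j mu) as HW.
  set (P := Rpower (INR j + 1) (2 * mu)) in *.
  set (P2 := Rpower (INR (j + 2) + 1) (2 * mu)) in *.
  set (W := Rpower 3 (Rabs (2 * mu))) in *.
  set (X := Cmod (Cminus (Cmult (RtoC al) (v j)) (Cmult (RtoC be) (v (j + 2)%nat)))) in *.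
  set (Z := Cmod (v j)) in *. set (Y := Cmod (v (j+2)%nat)) in *.
  assert (HP : 0 <= P) by (left; apply Rpower_pos).
  assert (HZ : 0 <= Z ^ 2) by apply pow2_ge_0.
  assert (HY : 0 <= Y ^ 2) by apply pow2_ge_0.
  assert (Hj2 : 0 <= (INR j + 1) ^ 2) by apply pow2_ge_0.
  apply Rle_trans with ((2 * al ^ 2 * Z ^ 2 + 2 * be ^ 2 * Y ^ 2) * (P * (INR j + 1) ^ 2)).
  { apply Rmult_le_compat_r. nra. auto. }
  replace ((2 * al ^ 2 * Z ^ 2 + 2 * be ^ 2 * Y ^ 2) * (P * (INR j + 1) ^ 2)) with
    (2 * Z ^ 2 * P * (al * (INR j + 1)) ^ 2 + 2 * Y ^ 2 * P * (be * (INR j + 1)) ^ 2) by ring.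
  assert (2 * Z ^ 2 * P * (al * (INR j + 1)) ^ 2 <= 2 * Z ^ 2 * P * INR k ^ 2).
  { apply Rmult_le_compat_l; auto. nra. }
  assert (2 * Y ^ 2 * P * (be * (INR j + 1)) ^ 2 <= 2 * Y ^ 2 * (W * P2) * INR k ^ 2).
  { apply mul_le4. nra. apply pow2_ge_0. apply Rmult_le_compat_l; nra. auto. }
  lra.
Qed.

Lemma Slam_bnd k mu : (1 <= k)%nat -> bnd (Slam k) mu (mu + 1).
Proof.
  intros Hk. apply (bnd_pw _ _ _ (2 * INR k ^ 2) (2 * INR k ^ 2 * Rpower 3 (Rabs (2 * mu))) 2).
  pose proof (pow2_ge_0 (INR k)); lra.
  apply Rmult_le_pos. pose proof (pow2_ge_0 (INR k)); lra. left; apply Rpower_pos.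
  intros; apply Slam_pw; auto.
Qed.

Lemma S0_pw mu v j :
  l2_term mu (S0 v) j <= 2 * l2_term mu v j + (2 * Rpower 3 (Rabs (2 * mu))) * l2_term mu v (j + 2).
Proof.
  unfold l2_term.
  pose proof (w3 j mu) as HW.
  set (P := Rpower (INR j + 1) (2 * mu)) in *.
  set (P2 := Rpower (INR (j + 2) + 1) (2 * mu)) in *.
  set (W := Rpower 3 (Rabs (2 * mu))) in *.
  assert (HP : 0 <= P) by (left; apply Rpower_pos).
  assert (Hc : Cmod (S0 v j) ^ 2 <= 2 * Cmod (v j) ^ 2 + 2 * Cmod (v (j+2)%nat) ^ 2).
  { destruct j; unfold S0.
    - replace (Cminus (v 0%nat) (Cmult (RtoC (1/2)) (v 2%nat))) with
        (Cminus (Cmult (RtoC 1) (v 0%nat)) (Cmult (RtoC (1/2)) (v 2%nat))) by ring.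
      eapply Rle_trans. apply Cmod_lin2_sq. simpl.
      pose proof (pow2_ge_0 (Cmod (v 2%nat))). lra.
    - replace (Cmult (RtoC (1/2)) (Cminus (v (S j)) (v (S j + 2)%nat))) with
        (Cminus (Cmult (RtoC (1/2)) (v (S j))) (Cmult (RtoC (1/2)) (v (S j + 2)%nat))) by ring.
      eapply Rle_trans. apply Cmod_lin2_sq.
      pose proof (pow2_ge_0 (Cmod (v (S j + 2)%nat))). pose proof (pow2_ge_0 (Cmod (v (S j)))).
      generalize dependent (Cmod (v (S j + 2)%nat)). generalize dependent (Cmod (v (S j))).
      intros. simpl in *. lra. }
  set (Z := Cmod (v j)) in *. set (Y := Cmod (v (j+2)%nat)) in *.
  assert (HZ : 0 <= Z ^ 2) by apply pow2_ge_0.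
  assert (HY : 0 <= Y ^ 2) by apply pow2_ge_0.
  apply Rle_trans with ((2 * Z ^ 2 + 2 * Y ^ 2) * P).
  { apply Rmult_le_compat_r; auto. }
  assert (Y ^ 2 * P <= Y ^ 2 * (W * P2)) by (apply Rmult_le_compat_l; auto).
  lra.
Qed.

Lemma Sop_same k mu : bnd (Sop k) mu mu.
Proof.
  destruct k.
  - simpl. apply (bnd_pw _ _ _ 2 (2 * Rpower 3 (Rabs (2 * mu))) 2). lra.
    pose proof (Rpower_pos 3 (Rabs (2 * mu))); lra.
    intros; apply S0_pw.
  - apply (bnd_ext (fun v => (fun w => w) (Slam (S k) v))). intros; reflexivity.
    apply (bnd_comp (Slam (S k)) (fun w => w) mu (mu + 1) mu). apply Slam_bnd. lia. apply bnd_embed. lra.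
Qed.

Lemma Sop_up k mu : (1 <= k)%nat -> bnd (Sop k) mu (mu + 1).
Proof.
  intros Hk. destruct k. lia. apply Slam_bnd. auto.
Qed.

Lemma Schain_same n : forall lo mu, bnd (Schain lo n) mu mu.
Proof.
  induction n; intros lo mu.
  - apply (bnd_ext (fun v => v)). intros; reflexivity. apply bnd_embed. lra.
  - apply (bnd_ext (fun v => Schain (S lo) n (Sop lo v))). intros; reflexivity.
    apply bnd_comp with mu. apply Sop_same. apply IHn.
Qed.

Lemma Schain_up n lo mu : (1 <= lo)%nat -> (1 <= n)%nat -> bnd (Schain lo n) mu (mu + 1).
Proof.
  intros Hl Hn. destruct n. lia.
  apply (bnd_ext (fun v => Schain (S lo) n (Sop lo v))). intros; reflexivity.
  apply bnd_comp with (mu + 1). apply Sop_up; auto. apply Schain_same.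
Qed.

Definition comb (al be : C) (x y : seqC) : seqC := fun k => Cplus (Cmult al (x k)) (Cmult be (y k)).

Lemma Dop_lin l al be x y : Dop l (comb al be x y) = comb al be (Dop l x) (Dop l y).
Proof. apply functional_extensionality; intro j. unfold Dop, comb. ring. Qed.

Lemma Sop_lin k al be x y : Sop k (comb al be x y) = comb al be (Sop k x) (Sop k y).
Proof.
  apply functional_extensionality; intro j. destruct k; simpl.
  - unfold S0, comb. destruct j; ring.
  - unfold Slam, comb. ring.
Qed.

Lemma Schain_lin n : forall lo al be x y, Schain lo n (comb al be x y) = comb al be (Schain lo n x) (Schain lo n y).
Proof.
  induction n; intros; simpl. reflexivity.
  rewrite Sop_lin. apply IHn.
Qed.

Lemma csum_ext m F G : (forall i, (i < m)%nat -> F i = G i) -> csum m F = csum m G.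
Proof.
  induction m; intros H; simpl. reflexivity.
  rewrite IHm by (intros; apply H; lia). rewrite H by lia. reflexivity.
Qed.

Lemma csum_lin m al be F G :
  csum m (fun i => Cplus (Cmult al (F i)) (Cmult be (G i))) = Cplus (Cmult al (csum m F)) (Cmult be (csum m G)).
Proof. induction m; simpl. ring. rewrite IHm. ring. Qed.

Lemma ser_lin' (a b : nat -> R) c d : ex_series a -> ex_series b ->
  Series (fun k => c * a k + d * b k) = c * Series a + d * Series b.
Proof. intros; apply ser_lin; auto. Qed.

Lemma ex_ser_lin' (a b : nat -> R) c d : ex_series a -> ex_series b ->
  ex_series (fun k => c * a k + d * b k).
Proof. intros; apply ser_lin; auto. Qed.

Lemma cseries_lin (p q : nat -> C) al be : cseries_conv p -> cseries_conv q ->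
  cseries (fun k => Cplus (Cmult al (p k)) (Cmult be (q k))) = Cplus (Cmult al (cseries p)) (Cmult be (cseries q)).
Proof.
  intros [Hp1 Hp2] [Hq1 Hq2]. unfold cseries. destruct al as [ar ai], be as [br bi].
  apply injective_projections; simpl.
  - rewrite (Series_ext _ (fun k => 1 * (ar * Re (p k) + (- ai) * Im (p k)) + 1 * (br * Re (q k) + (-bi) * Im (q k))))
      by (intro; unfold Re, Im; simpl; ring).
    rewrite ser_lin' by (apply ex_ser_lin'; auto).
    rewrite !ser_lin' by auto. unfold Re, Im. ring.
  - rewrite (Series_ext _ (fun k => 1 * (ar * Im (p k) + ai * Re (p k)) + 1 * (br * Im (q k) + bi * Re (q k))))
      by (intro; unfold Re, Im; simpl; ring).
    rewrite ser_lin' by (apply ex_ser_lin'; auto).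
    rewrite !ser_lin' by auto. unfold Re, Im. ring.
Qed.

Lemma Mop_lin l a al be x y :
  (forall j, cseries_conv (fun k => Cmult (mult_entry l a j k) (x k))) ->
  (forall j, cseries_conv (fun k => Cmult (mult_entry l a j k) (y k))) ->
  Mop l a (comb al be x y) = comb al be (Mop l a x) (Mop l a y).
Proof.
  intros Hx Hy. apply functional_extensionality; intro j. unfold Mop, comb.
  rewrite <- cseries_lin by auto. f_equal. apply functional_extensionality; intro k. ring.
Qed.

Definition HMprop (N : nat) (a : nat -> R -> C) : Prop :=
  forall l, (l < N)%nat -> forall mu : R, exists K, forall v, in_l2 mu v ->
     (forall j, cseries_conv (fun k => Cmult (mult_entry l (a l) j k) (v k))) /\
     in_l2 mu (Mop l (a l) v) /\ l2norm mu (Mop l (a l) v) <= K * l2norm mu v.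

Lemma sqrt_sq_le A B K : 0 <= A -> 0 <= B -> sqrt A <= K * sqrt B -> A <= K ^ 2 * B.
Proof.
  intros HA HB H.
  assert (H0 : 0 <= sqrt A) by apply sqrt_pos.
  assert (H1 : sqrt A * sqrt A <= (K * sqrt B) * (K * sqrt B)) by (apply Rmult_le_compat; lra).
  rewrite sqrt_sqrt in H1 by auto.
  replace (K * sqrt B * (K * sqrt B)) with (K ^ 2 * (sqrt B * sqrt B)) in H1 by ring.
  rewrite sqrt_sqrt in H1 by auto. auto.
Qed.

Lemma HM_conv N a l mu v : HMprop N a -> (l < N)%nat -> in_l2 mu v ->
  forall j, cseries_conv (fun k => Cmult (mult_entry l (a l) j k) (v k)).
Proof. intros HM Hl Hv. destruct (HM l Hl mu) as [K HK]. apply (HK v Hv). Qed.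

Lemma HM_bnd N a l mu : HMprop N a -> (l < N)%nat -> bnd (Mop l (a l)) mu mu.
Proof.
  intros HM Hl. destruct (HM l Hl mu) as [K HK]. exists (K ^ 2). split. apply pow2_ge_0.
  intros v Hv. destruct (HK v Hv) as [_ [E S]]. split; auto.
  unfold l2norm in S. apply sqrt_sq_le; auto; apply Q_nonneg.
Qed.

Lemma bnd_in T a b v : bnd T a b -> in_l2 a v -> in_l2 b (T v).
Proof. intros [K [_ H]] Hv. apply (H v Hv). Qed.

Lemma Lop_lin N a mu al be x y : HMprop N a -> (1 <= N)%nat -> in_l2 (mu + 1) x -> in_l2 (mu + 1) y ->
  forall j, Lop N a (comb al be x y) j = Cplus (Cmult al (Lop N a x j)) (Cmult be (Lop N a y j)).
Proof.
  intros HM HN Hx Hy j. unfold Lop.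
  rewrite (csum_ext (N - 1) (fun i => Schain (S i) (N - S i) (Mop (S i) (a (S i)) (Dop (S i) (comb al be x y))) j)
     (fun i => Cplus (Cmult al (Schain (S i) (N - S i) (Mop (S i) (a (S i)) (Dop (S i) x)) j))
                     (Cmult be (Schain (S i) (N - S i) (Mop (S i) (a (S i)) (Dop (S i) y)) j)))).
  2:{ intros i Hi. rewrite Dop_lin. rewrite Mop_lin.
      rewrite Schain_lin. reflexivity.
      apply (HM_conv N a (S i) mu). auto. lia. apply (bnd_in (Dop (S i)) (mu + 1)); auto. apply Dop_bnd.
      apply (HM_conv N a (S i) mu). auto. lia. apply (bnd_in (Dop (S i)) (mu + 1)); auto. apply Dop_bnd. }
  rewrite csum_lin.
  rewrite (Mop_lin 0 (a 0%nat)).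
    rewrite Schain_lin. rewrite Dop_lin. unfold comb. ring.
    apply (HM_conv N a 0 (mu + 1)); auto; lia.
    apply (HM_conv N a 0 (mu + 1)); auto; lia.
Qed.

Definition Kp (N : nat) (a : nat -> R -> C) (x : seqC) : seqC := fun j =>
  Cplus (csum (N - 1) (fun i => Schain (S i) (N - S i) (Mop (S i) (a (S i)) (Dop (S i) x)) j))
        (Schain 0 N (Mop 0 (a 0%nat) x) j).

Lemma Lop_split N a x j : Lop N a x j = Cplus (Dop N x j) (Kp N a x j).
Proof. unfold Lop, Kp. ring. Qed.

Lemma Kp_bnd N a mu : HMprop N a -> (1 <= N)%nat -> bnd (Kp N a) (mu + 1) (mu + 1).
Proof.
  intros HM HN. unfold Kp.
  apply (bnd_plus (fun v j => csum (N - 1) (fun i => Schain (S i) (N - S i) (Mop (S i) (a (S i)) (Dop (S i) v)) j))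
                  (fun v j => Schain 0 N (Mop 0 (a 0%nat) v) j)).
  - apply (bnd_csum (fun i v j => Schain (S i) (N - S i) (Mop (S i) (a (S i)) (Dop (S i) v)) j)).
    intros i Hi.
    apply (bnd_ext (fun v => Schain (S i) (N - S i) ((fun w => Mop (S i) (a (S i)) (Dop (S i) w)) v))).
    intros; reflexivity.
    apply bnd_comp with mu.
    + apply (bnd_comp (Dop (S i)) (Mop (S i) (a (S i))) (mu + 1) mu mu). apply Dop_bnd.
      apply (HM_bnd N); auto; lia.
    + apply Schain_up; lia.
  - apply (bnd_ext (fun v => Schain 0 N (Mop 0 (a 0%nat) v))). intros; reflexivity.
    apply (bnd_comp (Mop 0 (a 0%nat)) (Schain 0 N) (mu + 1) (mu + 1) (mu + 1)).
    apply (HM_bnd N); auto; lia. apply Schain_same.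
Qed.

Lemma nat_above (A : R) : exists m : nat, A <= INR m.
Proof.
  destruct (archimed A) as [H1 _].
  exists (Z.to_nat (up A)).
  destruct (Z_le_gt_dec 0 (up A)) as [Hz|Hz].
  - rewrite INR_IZR_INZ, Z2Nat.id by auto. lra.
  - apply Rle_trans with (IZR (up A)). lra. apply Rle_trans with 0.
    apply IZR_le; lia. apply pos_INR.
Qed.

Lemma ltb_true k n : (k < n)%nat -> (k <? n)%nat = true.
Proof. apply Nat.ltb_lt. Qed.
Lemma ltb_false k n : (n <= k)%nat -> (k <? n)%nat = false.
Proof. intro; apply Nat.ltb_nlt; lia. Qed.

Lemma fin_supp_l2 mu x n : (forall k, (n <= k)%nat -> x k = RtoC 0) -> in_l2 mu x.
Proof.
  intros H. unfold in_l2. apply (ex_series_incr_n _ n).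
  eapply ex_series_ext; [|apply ex_series_zero].
  intro k. simpl. unfold l2_term. rewrite H by lia. rewrite Cmod_0. ring.
Qed.

Lemma pad_in mu n x : in_l2 mu (pad n x).
Proof. apply (fin_supp_l2 _ _ n). intros k Hk. unfold pad. rewrite ltb_false; auto. Qed.

Lemma l2_dom mu x y : (forall k, Cmod (x k) <= Cmod (y k)) -> in_l2 mu y -> in_l2 mu x /\ Q mu x <= Q mu y.
Proof.
  intros H Hy. apply ser_cmp; auto. intro k. split. apply l2_term_nonneg.
  unfold l2_term. apply Rmult_le_compat_r. left; apply Rpower_pos.
  apply pow_incr. split. apply Cmod_ge_0. auto.
Qed.

Lemma Q_split mu e r d n :
  (forall k, (k < n)%nat -> r k = RtoC 0 /\ e k = d k) ->
  (forall k, (n <= k)%nat -> d k = RtoC 0 /\ e k = r k) ->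
  in_l2 mu r -> in_l2 mu d -> in_l2 mu e /\ Q mu e = Q mu r + Q mu d.
Proof.
  intros H1 H2 Hr Hd.
  assert (Ht : forall k, l2_term mu e k = 1 * l2_term mu r k + 1 * l2_term mu d k).
  { intro k. destruct (lt_dec k n) as [Hk|Hk].
    - destruct (H1 k Hk) as [A B]. unfold l2_term. rewrite A, B, Cmod_0. ring.
    - destruct (H2 k) as [A B]. lia. unfold l2_term. rewrite A, B, Cmod_0. ring. }
  destruct (ser_lin _ _ 1 1 Hr Hd) as [E S].
  split. eapply ex_series_ext; [|exact E]. intro; rewrite Ht; auto.
  unfold Q. rewrite (Series_ext _ _ Ht). rewrite S. ring.
Qed.

Lemma Q_zero_entries mu x : in_l2 mu x -> Q mu x = 0 -> forall k, x k = RtoC 0.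
Proof.
  intros Hx HQ k. pose proof (ser_term (l2_term mu x) k (l2_term_nonneg mu x) Hx) as H.
  unfold Q in HQ. rewrite HQ in H. pose proof (l2_term_nonneg mu x k).
  assert (H5 : l2_term mu x k = 0) by lra. unfold l2_term in H5.
  apply Rmult_integral in H5. destruct H5 as [H2|H2].
  - apply Cmod_eq_0. simpl in H2. rewrite Rmult_1_r in H2. apply Rmult_integral in H2. tauto.
  - pose proof (Rpower_pos (INR k + 1) (2 * mu)). lra.
Qed.

Lemma C_ext (z w : C) : Re z = Re w -> Im z = Im w -> z = w.
Proof. intros. apply injective_projections; auto. Qed.

Lemma fin_surjC n (G : seqC -> seqC) :
  (forall x y, (forall k, (k < n)%nat -> x k = y k) -> forall i, (i < n)%nat -> G x i = G y i) ->
  (forall x y al be i, (i < n)%nat -> G (comb al be x y) i = Cplus (Cmult al (G x i)) (Cmult be (G y i))) ->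
  (forall x, (forall i, (i < n)%nat -> G x i = RtoC 0) -> forall k, (k < n)%nat -> x k = RtoC 0) ->
  forall b, exists x, forall i, (i < n)%nat -> G x i = b i.
Proof.
  intros Hdep Hlin Hinj b.
  set (cx := fun (xr : nat -> R) (k : nat) => (xr k, xr (k + n)%nat) : C).
  set (f := fun (xr : nat -> R) (i : nat) => if (i <? n)%nat then Re (G (cx xr) i) else Im (G (cx xr) (i - n)%nat)).
  assert (Hdep' : forall x y, (forall k, (k < n + n)%nat -> x k = y k) -> forall i, (i < n)%nat -> G (cx x) i = G (cx y) i).
  { intros x y Hxy i Hi. apply Hdep; auto. intros k Hk. unfold cx. rewrite !Hxy by lia. auto. }
  set (br := fun i => if (i <? n)%nat then Re (b i) else Im (b (i - n)%nat)).
  destruct (FD.fin_surj (n + n) f) with (b := br) as [xr Hxr].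
  - intros x y Hxy i Hi. unfold f. destruct (lt_dec i n).
    + rewrite ltb_true by auto. rewrite (Hdep' x y); auto.
    + rewrite ltb_false by lia. rewrite (Hdep' x y); auto. lia.
  - intros x y a0 i Hi.
    assert (E : forall j, (j < n)%nat -> G (cx (fun k => a0 * x k + y k)) j =
       Cplus (Cmult (RtoC a0) (G (cx x) j)) (Cmult (RtoC 1) (G (cx y) j))).
    { intros j Hj. rewrite <- Hlin by auto. apply Hdep; auto. intros k Hk.
      unfold cx, comb. apply C_ext; unfold Re, Im; simpl; ring. }
    unfold f. destruct (lt_dec i n).
    + rewrite ltb_true by auto. rewrite E by auto. unfold Re; simpl. ring.
    + rewrite ltb_false by lia. rewrite E by lia. unfold Im; simpl. ring.
  - intros x Hx k Hk.
    assert (Z : forall i, (i < n)%nat -> G (cx x) i = RtoC 0).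
    { intros i Hi. apply C_ext.
      - pose proof (Hx i ltac:(lia)) as H. unfold f in H. rewrite ltb_true in H by auto. rewrite H. reflexivity.
      - pose proof (Hx (i + n)%nat ltac:(lia)) as H. unfold f in H. rewrite ltb_false in H by lia.
        replace (i + n - n)%nat with i in H by lia. rewrite H. reflexivity. }
    pose proof (Hinj _ Z) as H.
    destruct (lt_dec k n).
    + pose proof (H k l) as H'. unfold cx in H'. injection H'. auto.
    + pose proof (H (k - n)%nat ltac:(lia)) as H'. unfold cx in H'. injection H'.
      replace (k - n + n)%nat with k by lia. auto.
  - exists (cx xr). intros i Hi. apply C_ext.
    + pose proof (Hxr i ltac:(lia)) as H. unfold f, br in H. rewrite !ltb_true in H by auto. rewrite H.
      reflexivity.
    + pose proof (Hxr (i + n)%nat ltac:(lia)) as H. unfold f, br in H. rewrite !ltb_false in H by lia.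
      replace (i + n - n)%nat with i in H by lia. rewrite H. reflexivity.
Qed.

Definition HBlin (N : nat) (B : nat -> seqC -> C) (Dz : R) : Prop :=
  forall i, (i < N)%nat ->
     (forall v w, in_l2 Dz v -> in_l2 Dz w -> forall al be : C,
        B i (fun k => Cplus (Cmult al (v k)) (Cmult be (w k)))
        = Cplus (Cmult al (B i v)) (Cmult be (B i w))).

Lemma BLop_lin N a B Dz mu al be x y :
  HMprop N a -> (1 <= N)%nat -> HBlin N B Dz -> Dz <= mu + 1 ->
  in_l2 (mu + 1) x -> in_l2 (mu + 1) y ->
  forall j, BLop N a B (comb al be x y) j = Cplus (Cmult al (BLop N a B x j)) (Cmult be (BLop N a B y j)).
Proof.
  intros HM HN HB HD Hx Hy j. unfold BLop.
  destruct (j <? N)%nat eqn:E.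
  - apply Nat.ltb_lt in E. unfold comb. apply HB; auto.
    apply (bnd_in (fun v => v) (mu + 1)); auto. apply bnd_embed; auto.
    apply (bnd_in (fun v => v) (mu + 1)); auto. apply bnd_embed; auto.
  - apply (Lop_lin N a mu); auto.
Qed.

Lemma tail_bound N a B mu n x :
  (1 <= N)%nat -> (N <= n)%nat -> (forall k, (n <= k)%nat -> x k = RtoC 0) ->
  in_l2 (mu + 1) (Kp N a x) ->
  in_l2 mu (fun k => if (k <? n)%nat then RtoC 0 else BLop N a B x k) /\
  Q mu (fun k => if (k <? n)%nat then RtoC 0 else BLop N a B x k) <=
    (Rpower (INR N + 1) (Rabs (2 * mu)) / (INR (n - N) + 1) ^ 2) * Q (mu + 1) (Kp N a x).
Proof.
  intros HN Hn Hx HK.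
  set (W := Rpower (INR N + 1) (Rabs (2 * mu))).
  set (s := INR (n - N) + 1).
  assert (Hs : 0 < s) by (unfold s; pose proof (pos_INR (n - N)); lra).
  set (eps := W / s ^ 2).
  assert (Heps : 0 <= eps).
  { unfold eps, W. apply Rmult_le_pos. left; apply Rpower_pos. left; apply Rinv_0_lt_compat. apply pow_lt; auto. }
  set (g := fun k => eps * l2_term (mu + 1) (Kp N a x) k).
  set (b := fun k => if (k <? n)%nat then 0 else g (k - N)%nat).
  assert (Hpw : forall k, 0 <= l2_term mu (fun k => if (k <? n)%nat then RtoC 0 else BLop N a B x k) k <= b k).
  { intro k. split. apply l2_term_nonneg. unfold b, l2_term.
    destruct (lt_dec k n) as [Hk|Hk].
    - rewrite ltb_true by auto. rewrite Cmod_0. lra.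
    - rewrite ltb_false by lia.
      assert (E : BLop N a B x k = Kp N a x (k - N)%nat).
      { unfold BLop. rewrite ltb_false by lia. rewrite Lop_split. unfold Dop.
        replace (k - N + N)%nat with k by lia. rewrite Hx by lia. ring. }
      rewrite E. unfold g, l2_term.
      set (y := INR (k - N) + 1).
      assert (Hy : s <= y) by (unfold s, y; apply Rplus_le_compat_r, le_INR; lia).
      assert (Hy0 : 0 < y) by lra.
      assert (H1 : Rpower (INR k + 1) (2 * mu) <= W * Rpower y (2 * mu)).
      { unfold W. apply rp_cmp. pose proof (pos_INR k); lra. auto.
        - unfold y. replace (INR k) with (INR (k - N) + INR N) by (rewrite <- plus_INR; f_equal; lia).
          pose proof (pos_INR (k - N)). pose proof (pos_INR N). nra.
        - unfold y. replace (INR k) with (INR (k - N) + INR N) by (rewrite <- plus_INR; f_equal; lia).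
          pose proof (pos_INR (k - N)). pose proof (pos_INR N). nra. }
      rewrite rp_sq by auto.
      set (P := Rpower y (2 * mu)) in *.
      assert (HP : 0 <= P) by (left; apply Rpower_pos).
      set (V := Cmod (Kp N a x (k - N)%nat)).
      assert (HV : 0 <= V ^ 2) by apply pow2_ge_0.
      assert (Hss : s ^ 2 <= y ^ 2) by (apply pow_incr; lra).
      assert (Hs2 : 0 < s ^ 2) by (apply pow_lt; auto).
      unfold eps.
      apply Rle_trans with (V ^ 2 * (W * P)). apply Rmult_le_compat_l; auto.
      replace (W / s ^ 2 * (V ^ 2 * (P * y ^ 2))) with (V ^ 2 * (W * P) * (y ^ 2 / s ^ 2)) by (field; lra).
      assert (1 <= y ^ 2 / s ^ 2).
      { apply (Rmult_le_reg_r (s ^ 2)); auto. unfold Rdiv. rewrite Rmult_assoc, Rinv_l by lra. lra. }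
      assert (0 <= V ^ 2 * (W * P)).
      { apply Rmult_le_pos; auto. apply Rmult_le_pos; auto. left; apply Rpower_pos. }
      nra. }
  assert (Eg : ex_series g).
  { destruct (ser_lin _ _ eps 0 HK HK) as [E _].
    apply (ex_series_ext (fun k => eps * l2_term (mu + 1) (Kp N a x) k + 0 * l2_term (mu + 1) (Kp N a x) k)).
    intro; unfold g; rewrite Rmult_0_l, Rplus_0_r; reflexivity. exact E. }
  assert (Hg0 : forall k, 0 <= g k) by (intro; unfold g; apply Rmult_le_pos; auto; apply l2_term_nonneg).
  destruct (ser_shift g (n - N) Hg0 Eg) as [Es Ss].
  assert (Eb' : ex_series (fun k => b (n + k)%nat)).
  { eapply ex_series_ext; [|exact Es]. intro k. unfold b. rewrite ltb_false by lia. f_equal. lia. }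
  assert (Eb : ex_series b) by (apply (ex_series_incr_n b n); auto).
  destruct (ser_cmp _ _ Hpw Eb) as [E S]. split; auto.
  unfold Q. eapply Rle_trans. exact S.
  rewrite (Series_incr_n b n) by (auto; lia).
  rewrite sum_eq_R0.
  2:{ intros k Hk. unfold b. rewrite ltb_true by lia. auto. }
  rewrite (Series_ext _ (fun k => g (k + (n - N))%nat)).
  2:{ intro k. unfold b. rewrite ltb_false by lia. f_equal. lia. }
  unfold g at 2 in Ss. rewrite Series_scal_l in Ss. fold eps. unfold Q. lra.
Qed.

Lemma lower N a B mu : HMprop N a -> (1 <= N)%nat ->
  (forall u, in_l2 (mu + 1) u -> in_l2 mu (BLop N a B u)) ->
  (exists K, forall u, in_l2 (mu + 1) u -> l2norm (mu + 1) u <= K * l2norm mu (BLop N a B u)) ->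
  exists c n0, 0 <= c /\ (N <= n0)%nat /\ forall n, (n0 <= n)%nat -> forall x,
    (forall k, (n <= k)%nat -> x k = RtoC 0) -> Q (mu + 1) x <= c * Q mu (pad n (BLop N a B x)).
Proof.
  intros HM HN HT [K0 HK0].
  destruct (Kp_bnd N a mu HM HN) as [C1 [HC1 HKp]].
  set (W := Rpower (INR N + 1) (Rabs (2 * mu))).
  assert (HW : 0 < W) by apply Rpower_pos.
  destruct (nat_above (2 * K0 ^ 2 * W * C1)) as [m Hm].
  exists (2 * K0 ^ 2), (N + m)%nat. split. pose proof (pow2_ge_0 K0); lra. split. lia.
  intros n Hn x Hx.
  assert (Xx : in_l2 (mu + 1) x) by (apply (fin_supp_l2 _ _ n); auto).
  set (T := BLop N a B x).
  assert (YT : in_l2 mu T) by (apply HT; auto).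
  assert (Qx : Q (mu + 1) x <= K0 ^ 2 * Q mu T).
  { apply sqrt_sq_le. apply Q_nonneg. apply Q_nonneg. apply HK0; auto. }
  destruct (HKp x Xx) as [EK QK].
  destruct (tail_bound N a B mu n x HN ltac:(lia) Hx EK) as [Etl Qtl].
  fold W in Qtl.
  destruct (Q_split mu T (fun k => if (k <? n)%nat then RtoC 0 else BLop N a B x k) (pad n T) n) as [_ QT].
  - intros k Hk. unfold pad. rewrite !ltb_true by auto. auto.
  - intros k Hk. unfold pad. rewrite !ltb_false by auto. auto.
  - auto.
  - apply pad_in.
  set (s := INR (n - N) + 1) in *.
  assert (Hs1 : INR m + 1 <= s).
  { unfold s. apply Rplus_le_compat_r, le_INR. lia. }
  assert (Hs1' : 1 <= s) by (pose proof (pos_INR m); lra).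
  assert (Hs2' : s * 1 <= s * s) by (apply Rmult_le_compat_l; lra).
  assert (Hs2 : s <= s ^ 2) by (simpl; lra).
  assert (Hs0 : 0 < s ^ 2) by lra.
  assert (Heps : K0 ^ 2 * (W / s ^ 2) * C1 <= 1 / 2).
  { replace (K0 ^ 2 * (W / s ^ 2) * C1) with ((K0 ^ 2 * W * C1) / s ^ 2) by (field; lra).
    apply (Rmult_le_reg_r (s ^ 2)); auto. unfold Rdiv. rewrite Rmult_assoc, Rinv_l by lra. lra. }
  set (Qp := Q mu (pad n T)) in *.
  set (Qt := Q mu (fun k => if (k <? n)%nat then RtoC 0 else BLop N a B x k)) in *.
  set (QX := Q (mu + 1) x) in *.
  assert (HQK : Qt <= W / s ^ 2 * C1 * QX).
  { eapply Rle_trans. exact Qtl. rewrite Rmult_assoc. apply Rmult_le_compat_l; auto.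
    unfold Rdiv. apply Rmult_le_pos. lra. left; apply Rinv_0_lt_compat; auto. }
  assert (HQX0 : 0 <= QX) by apply Q_nonneg.
  assert (HK2 : 0 <= K0 ^ 2) by apply pow2_ge_0.
  assert (K0 ^ 2 * Qt <= 1 / 2 * QX).
  { eapply Rle_trans. apply Rmult_le_compat_l. auto. exact HQK.
    replace (K0 ^ 2 * (W / s ^ 2 * C1 * QX)) with ((K0 ^ 2 * (W / s ^ 2) * C1) * QX) by ring.
    apply Rmult_le_compat_r; auto. }
  rewrite QT in Qx. lra.
Qed.

Lemma tail_Q mu u n : in_l2 mu u -> (1 <= n)%nat ->
  Q mu (seq_sub u (pad n u)) = Series (l2_term mu u) - sum_f_R0 (l2_term mu u) (pred n).
Proof.
  intros Hu Hn.
  set (t := l2_term mu u).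
  assert (Ht : forall k, l2_term mu (seq_sub u (pad n u)) k = if (k <? n)%nat then 0 else t k).
  { intro k. unfold l2_term, seq_sub, pad, t. destruct (k <? n)%nat.
    - replace (Cminus (u k) (u k)) with (RtoC 0) by ring. rewrite Cmod_0. ring.
    - replace (Cminus (u k) (RtoC 0)) with (u k) by ring. reflexivity. }
  assert (E : ex_series (fun k => if (k <? n)%nat then 0 else t k)).
  { apply (ex_series_incr_n _ n). apply (ex_series_incr_n t n) in Hu.
    eapply ex_series_ext; [|exact Hu]. intro k. simpl. rewrite ltb_false by lia. reflexivity. }
  unfold Q. rewrite (Series_ext _ _ Ht).
  rewrite (Series_incr_n _ n) by auto. rewrite sum_eq_R0.
  2:{ intros k Hk. rewrite ltb_true by lia. auto. }
  rewrite (Series_incr_n t n) by auto.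
  rewrite (Series_ext (fun k => if (n + k <? n)%nat then 0 else t (n + k)%nat) (fun k => t (n + k)%nat)).
  ring. intro k. rewrite ltb_false by lia. reflexivity.
Qed.

Lemma tail_lim mu u : in_l2 mu u -> is_lim_seq (fun n => l2norm mu (seq_sub u (pad n u))) 0.
Proof.
  intros Hu.
  pose proof (Series_correct _ Hu) as HS.
  assert (HL : is_lim_seq (sum_n (l2_term mu u)) (Series (l2_term mu u))) by exact HS.
  apply is_lim_seq_spec in HL.
  apply is_lim_seq_spec. intro eps.
  assert (He : 0 < eps * eps) by (pose proof (cond_pos eps); nra).
  destruct (HL (mkposreal _ He)) as [N1 HN1].
  exists (S N1). intros n Hn. simpl in HN1.
  rewrite Rminus_0_r. unfold l2norm. fold (Q mu (seq_sub u (pad n u))).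
  rewrite tail_Q by (auto; lia).
  specialize (HN1 (pred n) ltac:(lia)).
  rewrite sum_n_Reals in HN1.
  set (R0 := Series (l2_term mu u) - sum_f_R0 (l2_term mu u) (Init.Nat.pred n)).
  assert (H0 : 0 <= R0).
  { unfold R0. pose proof (tail_Q mu u n Hu ltac:(lia)). rewrite <- H. apply Q_nonneg. }
  assert (H1 : R0 < eps * eps).
  { unfold R0. apply Rabs_def2 in HN1. lra. }
  rewrite Rabs_pos_eq by apply sqrt_pos.
  pose proof (cond_pos eps).
  rewrite <- (sqrt_square eps) by lra.
  apply sqrt_lt_1_alt. lra.
Qed.

Lemma pad_comb n al be x y : pad n (comb al be x y) = comb al be (pad n x) (pad n y).
Proof.
  apply functional_extensionality; intro k. unfold pad, comb. destruct (k <? n)%nat; auto. ring.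
Qed.

Theorem theorem4p5 (N : nat) (a : nat -> R -> C) (B : nat -> seqC -> C)
  (D lam : Z) (c : nat -> C) (f u : seqC) :
  (1 <= N)%nat ->
  (forall l, (l < N)%nat -> forall x, -1 <= x <= 1 ->
     continuous (fun y => Re (a l y)) x /\ continuous (fun y => Im (a l y)) x) ->
  (forall l, (l < N)%nat -> forall mu : R, exists K, forall v, in_l2 mu v ->
     (forall j, cseries_conv (fun k => Cmult (mult_entry l (a l) j k) (v k))) /\
     in_l2 mu (Mop l (a l) v) /\ l2norm mu (Mop l (a l) v) <= K * l2norm mu v) ->
  (forall i, (i < N)%nat ->
     (forall v w, in_l2 (IZR D) v -> in_l2 (IZR D) w -> forall al be : C,
        B i (fun k => Cplus (Cmult al (v k)) (Cmult be (w k)))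
        = Cplus (Cmult al (B i v)) (Cmult be (B i w))) /\
     (exists K, forall v, in_l2 (IZR D) v -> Cmod (B i v) <= K * l2norm (IZR D) v)) ->
  (D - 1 <= lam)%Z ->
  in_l2 (IZR lam - INR N + 1) f ->
  invertible_between (BLop N a B) (IZR lam + 1) (IZR lam) ->
  in_l2 (IZR lam + 1) u ->
  (forall j, BLop N a B u j = rhs N c f j) ->
  (exists Cst : R, exists n0 : nat, forall n, (n0 <= n)%nat ->
     finsec_invertible (BLop N a B) n /\
     forall un : seqC,
       (forall i, (i < n)%nat -> BLop N a B (pad n un) i = rhs N c f i) ->
       l2norm (IZR lam + 1) (seq_sub u (pad n un))
         <= Cst * l2norm (IZR lam + 1) (seq_sub u (pad n u))) /\
  is_lim_seq (fun n => l2norm (IZR lam + 1) (seq_sub u (pad n u))) 0.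
Proof.
  intros HN _ HM0 HB0 HDl Hf Hinv Hu Hsol.
  assert (HM : HMprop N a) by exact HM0.
  assert (HB : HBlin N B (IZR D)) by (intros i Hi; apply (HB0 i Hi)).
  assert (HD : IZR D <= IZR lam + 1).
  { rewrite <- plus_IZR. apply IZR_le. lia. }
  destruct Hinv as [[K1 Hbd] [_ [_ Hlow]]].
  set (T := BLop N a B) in *.
  assert (HT : forall v, in_l2 (IZR lam + 1) v -> in_l2 (IZR lam) (T v)) by (intros v Hv; apply Hbd; auto).
  assert (Tlin : forall al be x y, in_l2 (IZR lam + 1) x -> in_l2 (IZR lam + 1) y ->
            forall j, T (comb al be x y) j = Cplus (Cmult al (T x j)) (Cmult be (T y j))).
  { intros. apply (BLop_lin N a B (IZR D) (IZR lam)); auto. }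
  destruct (lower N a B (IZR lam) HM HN HT Hlow) as [cc [n0 [Hcc [Hn0 Hlb]]]].
  assert (Zero : forall n, (n0 <= n)%nat -> forall z, (forall k, (n <= k)%nat -> z k = RtoC 0) ->
            (forall i, (i < n)%nat -> T z i = RtoC 0) -> forall k, z k = RtoC 0).
  { intros n Hn z Hz HTz.
    assert (Q0 : Q (IZR lam) (pad n (T z)) = 0).
    { apply Series_0. intro k. unfold l2_term, pad. destruct (lt_dec k n).
      - rewrite ltb_true by auto. rewrite HTz by auto. rewrite Cmod_0. ring.
      - rewrite ltb_false by lia. rewrite Cmod_0. ring. }
    pose proof (Hlb n Hn z Hz) as H. fold T in H. rewrite Q0, Rmult_0_r in H.
    pose proof (Q_nonneg (IZR lam + 1) z).
    apply (Q_zero_entries (IZR lam + 1)). apply (fin_supp_l2 _ _ n); auto. lra. }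
  split.
  2:{ apply tail_lim; auto. }
  exists (sqrt (1 + cc * K1 ^ 2)), n0. intros n Hn. split.
  -
    intro b.
    destruct (fin_surjC n (fun x => T (pad n x))) with (b := b) as [x Hx].
    + intros x y Hxy i Hi. f_equal. apply functional_extensionality; intro k.
      unfold pad. destruct (lt_dec k n). rewrite ltb_true by auto. auto. rewrite ltb_false by lia. auto.
    + intros x y al be i Hi. rewrite pad_comb. apply Tlin; apply pad_in.
    + intros x Hx k Hk.
      pose proof (Zero n Hn (pad n x)) as H.
      assert (E : pad n x k = RtoC 0).
      { apply H; auto. intros k' Hk'. unfold pad. rewrite ltb_false; auto. }
      unfold pad in E. rewrite ltb_true in E by auto. auto.
    + exists x. split; auto.
      intros y Hy k Hk.
      set (d := comb (RtoC 1) (RtoC (-1)) (pad n y) (pad n x)).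
      assert (Hd : forall k', d k' = RtoC 0).
      { apply (Zero n Hn).
        - intros k' Hk'. unfold d, comb, pad. rewrite ltb_false by auto. ring.
        - intros i Hi. unfold d. rewrite Tlin by apply pad_in. rewrite Hy, Hx by auto. ring. }
      specialize (Hd k). unfold d, comb, pad in Hd. rewrite ltb_true in Hd by auto.
      replace (y k) with (Cplus (Cplus (Cmult (RtoC 1) (y k)) (Cmult (RtoC (-1)) (x k))) (x k)) by ring.
      rewrite Hd. ring.
  - intros un Hun.
    set (r := seq_sub u (pad n u)).
    set (d := seq_sub (pad n u) (pad n un)).
    assert (Hr : in_l2 (IZR lam + 1) r).
    { apply (l2_dom _ r u); auto. intro k. unfold r, seq_sub, pad. destruct (k <? n)%nat.
      - replace (Cminus (u k) (u k)) with (RtoC 0) by ring. rewrite Cmod_0. apply Cmod_ge_0.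
      - replace (Cminus (u k) (RtoC 0)) with (u k) by ring. lra. }
    assert (Hdsup : forall k, (n <= k)%nat -> d k = RtoC 0).
    { intros k Hk. unfold d, seq_sub, pad. rewrite ltb_false by auto. ring. }
    assert (Hd : in_l2 (IZR lam + 1) d) by (apply (fin_supp_l2 _ _ n); auto).
    destruct (Q_split (IZR lam + 1) (seq_sub u (pad n un)) r d n) as [_ QE]; auto.
    { intros k Hk. unfold r, d, seq_sub, pad. rewrite ltb_true by auto. split; ring. }
    { intros k Hk. unfold r, d, seq_sub, pad. rewrite ltb_false by auto. split; ring. }
    assert (Ed : d = comb (RtoC 1) (RtoC (-1)) (pad n u) (pad n un)).
    { apply functional_extensionality; intro k. unfold d, comb, seq_sub. ring. }
    assert (Er : r = comb (RtoC 1) (RtoC (-1)) u (pad n u)).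
    { apply functional_extensionality; intro k. unfold r, comb, seq_sub. ring. }
    assert (Qd1 : Q (IZR lam + 1) d <= cc * Q (IZR lam) (pad n (T d))) by (unfold T; apply Hlb; auto).
    assert (Qd2 : Q (IZR lam) (pad n (T d)) = Q (IZR lam) (pad n (T r))).
    { unfold Q. apply Series_ext. intro k. unfold l2_term, pad. destruct (lt_dec k n).
      - rewrite !ltb_true by auto. f_equal. f_equal.
        rewrite Ed, Er. rewrite !Tlin; try apply pad_in; auto.
        rewrite (Hun k l). rewrite <- Hsol.
        replace (Cplus (Cmult (RtoC 1) (T (pad n u) k)) (Cmult (RtoC (-1)) (T u k))) with
           (Copp (Cplus (Cmult (RtoC 1) (T u k)) (Cmult (RtoC (-1)) (T (pad n u) k)))) by ring.
        rewrite Cmod_opp. reflexivity.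
      - rewrite !ltb_false by lia. reflexivity. }
    assert (Qd3 : Q (IZR lam) (pad n (T r)) <= Q (IZR lam) (T r)).
    { apply l2_dom. intro k. unfold pad. destruct (k <? n)%nat. lra. rewrite Cmod_0. apply Cmod_ge_0.
      apply HT; auto. }
    assert (Qd4 : Q (IZR lam) (T r) <= K1 ^ 2 * Q (IZR lam + 1) r).
    { apply sqrt_sq_le. apply Q_nonneg. apply Q_nonneg. apply Hbd; auto. }
    assert (HQ : Q (IZR lam + 1) (seq_sub u (pad n un)) <= (1 + cc * K1 ^ 2) * Q (IZR lam + 1) r).
    { rewrite QE. rewrite Qd2 in Qd1.
      assert (cc * Q (IZR lam) (pad n (T r)) <= cc * (K1 ^ 2 * Q (IZR lam + 1) r)).
      { apply Rmult_le_compat_l; auto. lra. }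
      lra. }
    unfold l2norm. fold (Q (IZR lam + 1) (seq_sub u (pad n un))). fold r. fold (Q (IZR lam + 1) r).
    rewrite <- sqrt_mult.
    apply sqrt_le_1_alt. auto.
    pose proof (pow2_ge_0 K1). nra.
    apply Q_nonneg.
Qed.
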